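(* For every integer $j\ge0$ and every $t\ge0$, $$e^{-t}\frac{t^j}{j!}=\sum_{k=j}^\infty \sigma_2(k,j)\,j!\,(-1)^{k-j}\,p_k(t),$$ the series being convergent.
   Context: $\sigma_2(k,j)$ are the Stirling numbers of the second kind; $\sigma_1(k,j)$ are the unsigned Stirling numbers of the first kind ($\sigma_1(k,j)=0$ for $k<j$, $\sigma_1(0,0)=1$); $p_k(t)=e^{-t}\sum_{m=k}^\infty \frac{t^m}{m!}\frac{\sigma_1(m,k)}{m!}$. *)

(* Defs.v *)
From Stdlib Require Import Reals Arith.
From Coquelicot Require Import Coquelicot.
Open Scope R_scope.

Fixpoint stirling2 (n k : nat) : nat :=
  match n, k with
  | O, O => 1%nat
  | O, S _ => 0%nat
  | S _, O => 0%nat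
  | S n', S k' => (S k' * stirling2 n' (S k') + stirling2 n' k')%nat
  end.

Fixpoint stirling1 (n k : nat) : nat :=
  match n, k with
  | O, O => 1%nat
  | O, S _ => 0%nat
  | S _, O => 0%nat
  | S n', S k' => (n' * stirling1 n' (S k') + stirling1 n' k')%nat
  end.

(* p_k(t) = e^{-t} sum_{m>=k} t^m/m! * sigma1(m,k)/m!  (index shifted: m = i + k) *)
Definition p (k : nat) (t : R) : R :=
  exp (- t) * Series (fun i : nat =>
    t ^ (i + k) / INR (fact (i + k)) * INR (stirling1 (i + k) k) / INR (fact (i + k))).

(* Main.v *)
Require Import Defs.
From Stdlib Require Import Reals Arith Lia Lra.
From Coquelicot Require Import Coquelicot.
Open Scope R_scope.

Definition s1 m k := INR (stirling1 m k).
Definition s2 m k := INR (stirling2 m k).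

Lemma s1_S m k : s1 (S m) (S k) = INR m * s1 m (S k) + s1 m k.
Proof. unfold s1. change (stirling1 (S m) (S k)) with (m * stirling1 m (S k) + stirling1 m k)%nat. rewrite plus_INR, mult_INR; ring. Qed.
Lemma s2_S k j : s2 (S k) (S j) = INR (S j) * s2 k (S j) + s2 k j.
Proof. unfold s2. change (stirling2 (S k) (S j)) with (S j * stirling2 k (S j) + stirling2 k j)%nat. rewrite plus_INR, mult_INR; ring. Qed.
Lemma s1_S0 m : s1 (S m) 0 = 0. Proof. reflexivity. Qed.
Lemma s2_S0 m : s2 (S m) 0 = 0. Proof. reflexivity. Qed.
Lemma s1_0S m : s1 0 (S m) = 0. Proof. reflexivity. Qed.
Lemma s2_0S m : s2 0 (S m) = 0. Proof. reflexivity. Qed.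
Lemma s1_00 : s1 0 0 = 1. Proof. reflexivity. Qed.
Lemma s2_00 : s2 0 0 = 1. Proof. reflexivity. Qed.

Lemma stirling1_gt m k : (m < k)%nat -> stirling1 m k = 0%nat.
Proof.
  revert k; induction m; intros k H; destruct k; simpl; try lia; try reflexivity.
  rewrite IHm by lia. rewrite IHm by lia. lia.
Qed.
Lemma stirling2_gt k j : (k < j)%nat -> stirling2 k j = 0%nat.
Proof.
  revert j; induction k; intros j H; destruct j; simpl; try lia; try reflexivity.
  rewrite IHk by lia. rewrite IHk by lia. lia.
Qed.
Lemma stirling2_bound k j : (stirling2 k j <= (j+1)^k)%nat.
Proof.
  revert j; induction k; intros j; destruct j; simpl; try lia.
  pose proof (IHk (S j)). pose proof (IHk j).
  assert ((j+1)^k <= (S j + 1)^k)%nat by (apply Nat.pow_le_mono_l; lia).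
  replace (S j + 1)%nat with (S (S j)) in * by lia. replace (j+1)%nat with (S j) in * by lia.
  nia.
Qed.
Lemma s1_ge0 m k : 0 <= s1 m k. Proof. apply pos_INR. Qed.
Lemma s2_ge0 m k : 0 <= s2 m k. Proof. apply pos_INR. Qed.

Lemma sum_first (f : nat -> R) K : (forall i, f (S i) = 0) -> sum_f_R0 f K = f 0%nat.
Proof. intros H; induction K; simpl; [reflexivity|]. rewrite IHK, H; ring. Qed.

Lemma sum_zero (f : nat -> R) K : (forall i, (i <= K)%nat -> f i = 0) -> sum_f_R0 f K = 0.
Proof. intros H; induction K; simpl. apply H; lia. rewrite IHK, H; [ring|lia|]. intros; apply H; lia. Qed.

Lemma sum_shift1 (f : nat -> R) K : (0 < K)%nat ->
  sum_f_R0 (fun i => f (S i)) (pred K) = sum_f_R0 f K - f 0%nat.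
Proof. intros H. rewrite (decomp_sum f K H). ring. Qed.

Lemma sum_scal (c : R) (f : nat -> R) K : sum_f_R0 (fun i => c * f i) K = c * sum_f_R0 f K.
Proof. rewrite scal_sum. apply sum_eq; intros; ring. Qed.

Lemma Ulem m : forall j K, (m <= K)%nat ->
  sum_f_R0 (fun k => (-1)^k * s1 m k * s2 k j) K = if Nat.eq_dec m j then (-1)^j else 0.
Proof.
  induction m; intros j K HK.
  - rewrite sum_first. 2:{ intros i. rewrite s1_0S. ring. }
    destruct j; simpl; [rewrite s1_00, s2_00; ring|]. rewrite s2_0S; ring.
  - assert (HK0 : (0 < K)%nat) by lia.
    rewrite (decomp_sum _ K HK0). rewrite s1_S0.
    destruct j as [|j'].
    + rewrite sum_zero. destruct (Nat.eq_dec (S m) 0); [lia|ring].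
      intros i _. rewrite s2_S0; ring.
    + rewrite (sum_eq _ (fun i => INR m * ((-1)^(S i) * s1 m (S i) * s2 (S i) (S j'))
          + (- INR (S j')) * ((-1)^i * s1 m i * s2 i (S j')) + (-1) * ((-1)^i * s1 m i * s2 i j'))).
      2:{ intros i _. rewrite s1_S, s2_S. simpl pow. ring. }
      rewrite !plus_sum, !sum_scal.
      rewrite (sum_shift1 (fun i => (-1)^i * s1 m i * s2 i (S j'))) by lia.
      rewrite s2_0S.
      rewrite !IHm by lia.
      destruct (Nat.eq_dec m (S j')), (Nat.eq_dec m j'), (Nat.eq_dec (S m) (S j')); try lia.
      * subst. rewrite S_INR. ring.
      * subst. simpl. ring.
      * ring.
Qed.

Definition presum (f : nat -> R) j := match j with O => 0 | S j' => sum_f_R0 f j' end.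

Lemma presum_S f j : presum f (S j) = f 0%nat + presum (fun i => f (S i)) j.
Proof. destruct j; unfold presum. simpl; ring. rewrite (decomp_sum f (S j)) by lia. simpl pred. ring. Qed.

Lemma sum_split (f : nat -> R) N j :
  sum_f_R0 f (N + j) = sum_f_R0 (fun n => f (n + j)%nat) N + presum f j.
Proof.
  revert f; induction j; intros f.
  - simpl. rewrite Nat.add_0_r. replace (sum_f_R0 (fun n => f (n+0)%nat) N) with (sum_f_R0 f N).
    ring. apply sum_eq; intros; rewrite Nat.add_0_r; auto.
  - replace (N + S j)%nat with (S (N + j)) by lia.
    rewrite (decomp_sum f (S (N+j))) by lia. simpl pred.
    rewrite (IHj (fun i => f (S i))). rewrite presum_S.
    replace (sum_f_R0 (fun n => f (n + S j)%nat) N) with (sum_f_R0 (fun n => f (S (n + j))) N).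
    ring. apply sum_eq; intros; f_equal; lia.
Qed.

Lemma presum_zero f j : (forall i, (i < j)%nat -> f i = 0) -> presum f j = 0.
Proof. destruct j; simpl; auto. intros H. apply sum_zero. intros; apply H; lia. Qed.

Lemma presum_ge0 f j : (forall i, 0 <= f i) -> 0 <= presum f j.
Proof. destruct j; simpl; intros; [lra|]. apply cond_pos_sum; auto. Qed.

Lemma m1sq j : (-1)^j * (-1)^j = 1.
Proof. rewrite <- pow_add. replace (j+j)%nat with (2*j)%nat by lia. rewrite pow_mult.
  replace ((-1)^2) with 1 by ring. apply pow1. Qed.

Definition B j N m := sum_f_R0 (fun n => (-1)^n * s2 (n+j) j * s1 m (n+j)) N.

Lemma B_val j N m : (m <= N + j)%nat -> B j N m = if Nat.eq_dec m j then 1 else 0.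
Proof.
  intros H. pose proof (Ulem m j (N+j) H) as U.
  rewrite sum_split in U. rewrite presum_zero in U.
  2:{ intros i Hi. unfold s2. rewrite stirling2_gt by lia. simpl; ring. }
  rewrite Rplus_0_r in U.
  assert (E : (-1)^j * B j N m = sum_f_R0 (fun n => (-1)^(n+j) * s1 m (n+j) * s2 (n+j) j) N).
  { unfold B. rewrite <- sum_scal. apply sum_eq; intros. rewrite pow_add. ring. }
  rewrite U in E. destruct (Nat.eq_dec m j).
  - apply (f_equal (Rmult ((-1)^j))) in E. rewrite <- Rmult_assoc, m1sq in E. lra.
  - apply (f_equal (Rmult ((-1)^j))) in E. rewrite <- Rmult_assoc, m1sq in E. lra.
Qed.

Lemma s1_sum_le m : forall K, sum_f_R0 (fun k => s1 m k) K <= INR (fact m).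
Proof.
  induction m; intros K.
  - rewrite sum_first. rewrite s1_00; simpl; lra. intros; apply s1_0S.
  - destruct K. simpl. rewrite s1_S0. apply pos_INR.
    rewrite (decomp_sum _ (S K)) by lia. simpl pred. rewrite s1_S0.
    rewrite (sum_eq _ (fun i => INR m * s1 m (S i) + s1 m i)) by (intros; apply s1_S).
    rewrite plus_sum, sum_scal.
    pose proof (sum_shift1 (fun i => s1 m i) (S K) ltac:(lia)) as Hs. simpl pred in Hs. rewrite Hs.
    pose proof (IHm (S K)). pose proof (IHm K). pose proof (s1_ge0 m 0). pose proof (pos_INR m).
    change (fact (S m)) with (S m * fact m)%nat. rewrite mult_INR, S_INR.
    assert (INR m * (sum_f_R0 (fun k => s1 m k) (S K) - s1 m 0) <= INR m * INR (fact m)).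
    { apply Rmult_le_compat_l; lra. }
    assert (sum_f_R0 (s1 m) K <= INR (fact m)) by apply IHm. lra.
Qed.

Lemma B_bound j N m : Rabs (B j N m) <= INR (j+1) ^ m * INR (fact m).
Proof.
  unfold B. eapply Rle_trans. apply Rsum_abs.
  eapply Rle_trans. apply (sum_Rle _ (fun n => INR (j+1)^m * s1 m (n+j))).
  { intros n _. rewrite !Rabs_mult, pow_1_abs, Rabs_pos_eq, Rabs_pos_eq by (apply pos_INR).
    rewrite Rmult_1_l. destruct (le_lt_dec (n+j) m).
    - apply Rmult_le_compat_r. apply s1_ge0. unfold s2. rewrite <- pow_INR. apply le_INR.
      eapply Nat.le_trans. apply stirling2_bound. apply Nat.pow_le_mono_r; lia.
    - unfold s1. rewrite stirling1_gt by lia. simpl; lra. }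
  rewrite sum_scal. apply Rmult_le_compat_l. apply pow_le, pos_INR.
  eapply Rle_trans. 2: apply (s1_sum_le m (N+j)). rewrite sum_split.
  pose proof (presum_ge0 (fun k => s1 m k) j (s1_ge0 m)). lra.
Qed.

Lemma exp_series x : is_series (fun m => x ^ m / INR (fact m)) (exp x).
Proof.
  pose proof (is_exp_Reals x) as H. unfold is_pseries in H.
  eapply is_series_ext. 2: exact H. intros n. simpl. rewrite pow_n_pow. unfold scal; simpl.
  unfold mult; simpl. unfold Rdiv; ring.
Qed.

Lemma ex_le (a b : nat -> R) : (forall n, Rabs (a n) <= b n) -> ex_series b -> ex_series a.
Proof. intros H Hb. apply (ex_series_le a b); auto. Qed.

Lemma ex_tail (a : nat -> R) n : ex_series a -> ex_series (fun k => a (n + k)%nat).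
Proof. intros H. destruct n. - eapply ex_series_ext. 2: exact H. intros; reflexivity.
  - destruct H as [l Hl]. change R in l. exists (l - sum_n a n). apply (is_series_incr_n a (S n)). lia.
   match goal with |- is_series _ ?v => replace v with l end. exact Hl. simpl. unfold plus; simpl. change (l = Rplus (Rminus l (sum_n a n)) (sum_n a n) :> R). ring. Qed.

Section Main.
Variable t : R.
Hypothesis ht : 0 <= t.
Variable j : nat.

Definition A m k := t ^ m / INR (fact m) * s1 m k / INR (fact m).

Lemma A_bound m k : Rabs (A m k) <= t ^ m / INR (fact m).
Proof.
  unfold A. pose proof (INR_fact_lt_0 m). pose proof (pow_le t m ht).
  assert (s1 m k <= INR (fact m)).
  { eapply Rle_trans. 2: apply (s1_sum_le m k). destruct k. simpl; lra.
    simpl. pose proof (cond_pos_sum (fun k => s1 m k) k (s1_ge0 m)). lra. }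
  rewrite Rabs_pos_eq.
  - unfold Rdiv. rewrite Rmult_assoc. rewrite <- (Rmult_1_r (t^m * / INR (fact m))) at 2.
    apply Rmult_le_compat_l. apply Rmult_le_pos; auto; left; apply Rinv_0_lt_compat; auto.
    apply (Rmult_le_reg_r (INR (fact m))); auto. rewrite Rmult_assoc, Rinv_l; lra.
  - unfold Rdiv. repeat apply Rmult_le_pos; auto; try apply s1_ge0; left; apply Rinv_0_lt_compat; auto.
Qed.

Lemma A_zero m k : (m < k)%nat -> A m k = 0.
Proof. intros H. unfold A, s1. rewrite stirling1_gt by lia. simpl. unfold Rdiv; ring. Qed.

Lemma ex_A k : ex_series (fun m => A m k).
Proof. apply (ex_le _ (fun m => t ^ m / INR (fact m))). intros; apply A_bound. eexists; apply exp_series. Qed.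

Definition Ssum k := Series (fun m => A m k).

Lemma p_eq k : p k t = exp (- t) * Ssum k.
Proof.
  unfold p, Ssum. f_equal. change (Series (fun i => A (i + k) k) = Series (fun m => A m k)).
  destruct k.
  - apply Series_ext; intros; rewrite Nat.add_0_r; auto.
  - rewrite (Series_incr_n (fun m => A m (S k)) (S k)) by (lia || apply ex_A).
    rewrite sum_zero. rewrite Rplus_0_l. apply Series_ext; intros; f_equal; lia.
    intros i Hi. apply A_zero. simpl in Hi. lia.
Qed.

Lemma is_series_scalR c (a : nat -> R) l : is_series a l -> is_series (fun m => c * a m) (c * l).
Proof. intros H. apply (is_series_scal c) in H. exact H. Qed.
Lemma is_series_plusR (a b : nat -> R) la lb : is_series a la -> is_series b lb ->
  is_series (fun m => a m + b m) (la + lb).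
Proof. intros H1 H2. pose proof (is_series_plus _ _ _ _ H1 H2) as H. exact H. Qed.

Definition F N m := sum_f_R0 (fun n => (-1)^n * s2 (n+j) j * A m (n+j)) N.

Lemma F_eq N m : F N m = t ^ m / INR (fact m) / INR (fact m) * B j N m.
Proof. unfold F, B. rewrite <- sum_scal. apply sum_eq; intros. unfold A. pose proof (INR_fact_neq_0 m). field; auto. Qed.

Lemma PS N : is_series (F N) (sum_f_R0 (fun n => (-1)^n * s2 (n+j) j * Ssum (n+j)) N).
Proof.
  induction N.
  - unfold F; simpl sum_f_R0. apply (is_series_scalR _ (fun m => A m (0+j))). apply Series_correct, ex_A.
  - unfold F; simpl sum_f_R0. apply (is_series_plusR (F N) (fun m => _ * A m (S N + j))). exact IHN.
    apply (is_series_scalR _ (fun m => A m (S N+j))). apply Series_correct, ex_A.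
Qed.

Lemma delta_sum (L : R) K : (j <= K)%nat ->
  sum_f_R0 (fun m => if Nat.eq_dec m j then L else 0) K = L.
Proof.
  intros H; induction K as [|K IHK].
  - cbn [sum_f_R0]. destruct (Nat.eq_dec 0 j); [auto|lia].
  - cbn [sum_f_R0]. destruct (le_lt_dec j K).
    + rewrite IHK by auto. destruct (Nat.eq_dec (S K) j); [lia|ring].
    + rewrite sum_zero. destruct (Nat.eq_dec (S K) j); [ring|lia].
      intros i Hi. destruct (Nat.eq_dec i j); [lia|auto].
Qed.

Definition g m := (t * INR (j+1)) ^ m / INR (fact m).

Lemma F_bound N m : Rabs (F N m) <= g m.
Proof.
  rewrite F_eq. unfold g. rewrite Rabs_mult. pose proof (INR_fact_lt_0 m).
  rewrite (Rabs_pos_eq (t ^ m / _ / _)).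
  2:{ unfold Rdiv. repeat apply Rmult_le_pos; try apply pow_le; auto; left; apply Rinv_0_lt_compat; auto. }
  eapply Rle_trans. apply Rmult_le_compat_l.
  { unfold Rdiv. repeat apply Rmult_le_pos; try apply pow_le; auto; left; apply Rinv_0_lt_compat; auto. }
  apply B_bound. rewrite Rpow_mult_distr. right. field. lra.
Qed.

Lemma main_lemma :
  is_series (fun n : nat =>
      INR (stirling2 (n + j) j) * INR (fact j) * (-1) ^ n * p (n + j) t)
    (exp (- t) * t ^ j / INR (fact j)).
Proof.
  apply is_series_Reals. intros eps Heps.
  set (c := exp (- t) * INR (fact j)).
  assert (Hc : 0 < c) by (apply Rmult_lt_0_compat; [apply exp_pos|apply INR_fact_lt_0]).
  pose proof (exp_series (t * INR (j+1))) as Hg. fold g in Hg.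
  pose proof (Hg) as Hg'. apply is_series_Reals in Hg'.
  destruct (Hg' (eps / c)) as [N0 HN0]. apply Rdiv_lt_0_compat; auto.
  exists N0. intros N HN.
  set (L := t ^ j / INR (fact j) / INR (fact j)).
  assert (C1 : sum_f_R0 (fun n => INR (stirling2 (n + j) j) * INR (fact j) * (-1) ^ n * p (n + j) t) N
               = c * Series (F N)).
  { rewrite (is_series_unique _ _ (PS N)). rewrite <- sum_scal. apply sum_eq; intros.
    rewrite p_eq. unfold c, s2. ring. }
  assert (C2 : exp (- t) * t ^ j / INR (fact j) = c * L).
  { unfold c, L. pose proof (INR_fact_neq_0 j). field; auto. }
  assert (exF : ex_series (F N)) by (eexists; apply PS).
  assert (exg : ex_series g) by (eexists; apply Hg).
  assert (C3 : Series (F N) = L + Series (fun k => F N (S (N + j) + k))).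
  { rewrite (Series_incr_n (F N) (S (N+j))) by (lia || auto). simpl pred. f_equal.
    rewrite (sum_eq _ (fun m => if Nat.eq_dec m j then L else 0)). apply delta_sum; lia.
    intros i Hi. rewrite F_eq, B_val by lia. unfold L. destruct (Nat.eq_dec i j). subst; ring. ring. }
  assert (C4 : Series g = sum_f_R0 g (N + j) + Series (fun k => g (S (N + j) + k))).
  { rewrite (Series_incr_n g (S (N+j))) by (lia || auto). reflexivity. }
  assert (exgt : ex_series (fun k => g (S (N + j) + k))) by (apply ex_tail; auto).
  assert (C5 : Rabs (Series (fun k => F N (S (N + j) + k))) <= Series (fun k => g (S (N + j) + k))).
  { eapply Rle_trans. apply Series_Rabs.
    apply (ex_le _ (fun k => g (S (N + j) + k))); auto. intros; rewrite Rabs_Rabsolu; apply F_bound.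
    apply Series_le; auto. intros; split; [apply Rabs_pos|apply F_bound]. }
  pose proof (HN0 (N + j)%nat ltac:(lia)) as H1. unfold R_dist in *.
  rewrite (is_series_unique _ _ Hg) in C4.
  rewrite C1, C2, C3.
  replace (c * (L + Series (fun k => F N (S (N + j) + k))) - c * L)
    with (c * Series (fun k => F N (S (N + j) + k))) by ring.
  rewrite Rabs_mult, (Rabs_pos_eq c) by lra.
  assert (Rabs (Series (fun k => F N (S (N + j) + k))) < eps / c).
  { pose proof (Rabs_pos (Series (fun k => F N (S (N + j) + k)))). rewrite Rabs_minus_sym in H1. rewrite Rabs_pos_eq in H1 by lra. lra. }
  apply (Rmult_lt_compat_l c) in H; auto. unfold Rdiv in H. rewrite <- Rmult_assoc, (Rmult_comm c eps), Rmult_assoc, Rinv_r, Rmult_1_r in H; lra.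
Qed.
End Main.

Theorem lemma2 (j : nat) (t : R) (ht : 0 <= t) :
  is_series (fun n : nat =>
      INR (stirling2 (n + j) j) * INR (fact j) * (-1) ^ n * p (n + j) t)
    (exp (- t) * t ^ j / INR (fact j)).
Proof. exact (main_lemma t ht j). Qed.
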